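(* Let $C$ be a cycle and let $\mathcal H,\mathcal K$ be families of vertex subsets of $C$ such that $(C,\mathcal H,\mathcal K)$ is strong $axax$-free. Then there is an outerplanar graph $Q$ with vertex set $\mathcal H$ such that for every $K\in\mathcal K$ the set $\mathcal H_K=\{H\in\mathcal H: H\cap K\ne\emptyset\}$ induces a connected subgraph of $Q$.
   Context: Let $C$ be a cycle with a fixed cyclic orientation; ''vertices $p_1,p_2,p_3,p_4$ in cyclic order'' means they are four distinct vertices met in this order when traversing $C$. Members of $\mathcal H,\mathcal K$ are arbitrary subsets of $V(C)$ (not necessarily inducing connected subgraphs of $C$). A pair $H,H'\in\mathcal H$ is an $axax$-pair if there are vertices $a_1,x_1,a_2,x_2$ in cyclic order with $a_1,a_2\in H\setminus H'$ and $x_1,x_2\in H'$; $(C,\mathcal H)$ is $axax$-free if it has no $axax$-pair. $(C,\mathcal H,\mathcal K)$ satisfies the intersection property if for all $H\in\mathcal H$, $K\in\mathcal K$ having vertices $h_1,k_1,h_2,k_2$ in cyclic order with $h_1,h_2\in H$, $k_1,k_2\in K$, we have $H\cap K\ne\emptyset$. $(C,\mathcal H,\mathcal K)$ is strong $axax$-free if $(C,\mathcal H)$ and $(C,\mathcal K)$ are both $axax$-free and the intersection property holds. A graph is outerplanar if it has a plane embedding with all vertices on the outer face. *)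

(* Defs.v *)
From mathcomp Require Import all_boot.
Set Implicit Arguments. Unset Strict Implicit. Unset Printing Implicit Defensive.

(* The cycle C has vertex set 'I_n, traversed in increasing index order
   0 -> 1 -> ... -> n-1 -> 0 (the fixed cyclic orientation). *)

Definition cyc_order4 (n : nat) (p1 p2 p3 p4 : 'I_n) : bool :=
  [|| [&& p1 < p2, p2 < p3 & p3 < p4],
      [&& p2 < p3, p3 < p4 & p4 < p1],
      [&& p3 < p4, p4 < p1 & p1 < p2]
    | [&& p4 < p1, p1 < p2 & p2 < p3] ].

Definition axax_pair (n : nat) (H H' : {set 'I_n}) : Prop :=
  exists a1 x1 a2 x2 : 'I_n,
    [/\ cyc_order4 a1 x1 a2 x2,
        a1 \in H :\: H', a2 \in H :\: H', x1 \in H' & x2 \in H'].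

Definition axax_free (n : nat) (F : {set {set 'I_n}}) : Prop :=
  forall H H', H \in F -> H' \in F -> ~ axax_pair H H'.

Definition intersection_property (n : nat) (HH KK : {set {set 'I_n}}) : Prop :=
  forall H K, H \in HH -> K \in KK ->
  forall h1 k1 h2 k2 : 'I_n,
    cyc_order4 h1 k1 h2 k2 -> h1 \in H -> h2 \in H -> k1 \in K -> k2 \in K ->
    H :&: K != set0.

Definition strong_axax_free (n : nat) (HH KK : {set {set 'I_n}}) : Prop :=
  [/\ axax_free HH, axax_free KK & intersection_property HH KK].

Definition simple_graph_on (T : finType) (V : {set T}) (Q : rel T) : Prop :=
  [/\ forall x y, Q x y -> Q y x,
      forall x, ~~ Q x x
    & forall x y, Q x y -> (x \in V) && (y \in V)].

(* Outerplanar: the vertices can be placed in distinct positions around a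
   circle (positions given by an injective pos : T -> nat on V, read
   cyclically) so that no two edges, drawn as chords, cross; i.e. there are no
   edges {a,b}, {c,d} with pos a < pos c < pos b < pos d. *)
Definition outerplanar (T : finType) (V : {set T}) (Q : rel T) : Prop :=
  exists pos : T -> nat,
    {in V &, injective pos} /\
    (forall a b c d, Q a b -> Q c d ->
       ~ [/\ pos a < pos c, pos c < pos b & pos b < pos d]).

Definition induces_connected (T : finType) (Q : rel T) (S : {set T}) : Prop :=
  forall x y, x \in S -> y \in S ->
    connect [rel u v | [&& Q u v, u \in S & v \in S]] x y.

(* Main.v *)
Require Import Defs.
From mathcomp Require Import all_boot.
From mathcomp Require Import zify.
Set Implicit Arguments. Unset Strict Implicit. Unset Printing Implicit Defensive.

Section Geo.
Variable n : nat.
Implicit Types (A B H : {set 'I_n}) (x y : 'I_n).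

Lemma cyc_lin (a b c d : 'I_n) : a < b -> b < c -> c < d ->
  [/\ cyc_order4 a b c d, cyc_order4 b c d a, cyc_order4 c d a b & cyc_order4 d a b c].
Proof. by move=> h1 h2 h3; rewrite /cyc_order4 h1 h2 h3 !orbT. Qed.

Definition minS H : nat :=
  if [pick x in H] is Some x0 then val [arg min_(y < x0 in H) val y] else n.

Lemma minS_le H x : x \in H -> minS H <= x.
Proof.
move=> xH; rewrite /minS; case: pickP => [x0 x0H|/(_ x)]; last by rewrite xH.
by case: arg_minnP => // y _ /(_ x xH).
Qed.

Lemma minS_mem H x : x \in H -> exists2 y, y \in H & (y : nat) = minS H.
Proof.
move=> xH; rewrite /minS; case: pickP => [x0 x0H|/(_ x)]; last by rewrite xH.
by case: arg_minnP => // y yH _; exists y.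
Qed.

Definition code H : nat := \sum_(x in H) 2 ^ x.

Lemma sum_lt_pow (S : {set 'I_n}) k : (forall x, x \in S -> x < k) -> code S < 2 ^ k.
Proof.
elim: k S => [|k IH] S hS.
  rewrite /code big_pred0 // => x; apply/negbTE/negP => /hS.
  by rewrite ltn0.
rewrite /code (bigID (fun x : 'I_n => x < k)) /=.
have h1 : \sum_(i in S | i < k) 2 ^ i < 2 ^ k.
  have := IH [set x in S | x < k]; rewrite /code.
  rewrite (eq_bigl (fun i => (i \in S) && (i < k))); last by move=> i; rewrite inE.
  apply=> x; rewrite inE => /andP[].  by [].
have h2 : \sum_(i in S | ~~ (i < k)) 2 ^ i <= 2 ^ k.
  case: (boolP [exists x, (x \in S) && (val x == k)]) => [/existsP[x0 /andP[x0S /eqP x0k]]|/existsPn hn].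
    rewrite (big_pred1 x0) ?x0k // => i; apply/idP/idP.
      case/andP=> iS; rewrite -leqNgt => ki; have := hS i iS.
      rewrite ltnS => ik; apply/eqP/val_inj => /=; rewrite x0k; apply/eqP; rewrite eqn_leq ik ki.
      done.
    by move/eqP=> ->; rewrite x0S x0k ltnn.
  rewrite big_pred0 // => i; apply/negbTE/negP => /andP[iS]; rewrite -leqNgt => ki.
  have := hn i; rewrite iS /= => /negP; apply; have := hS i iS; rewrite ltnS => ik.
  by rewrite eqn_leq ik ki.
rewrite expnS mul2n -addnn.
by have := leq_add h1 h2; rewrite addSn.
Qed.

Lemma code_gt A B d : d \in A :\: B -> (forall y, y \in B :\: A -> y < d) ->
  code B < code A.
Proof.
move=> dAB hB.
have eA : code A = \sum_(x in A | x \in B) 2 ^ x + \sum_(x in A | x \notin B) 2 ^ x.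
  by rewrite /code (bigID (fun x => x \in B)).
have eB : code B = \sum_(x in B | x \in A) 2 ^ x + \sum_(x in B | x \notin A) 2 ^ x.
  by rewrite /code (bigID (fun x => x \in A)).
have e1 : \sum_(x in A | x \in B) 2 ^ x = \sum_(x in B | x \in A) 2 ^ x.
  by apply: eq_bigl => x; rewrite andbC.
have h2 : \sum_(x in B | x \notin A) 2 ^ x < 2 ^ d.
  have := @sum_lt_pow (B :\: A) d hB; rewrite /code.
  by rewrite (eq_bigl (fun x => (x \in B) && (x \notin A))) // => x; rewrite inE andbC.
have h3 : 2 ^ d <= \sum_(x in A | x \notin B) 2 ^ x.
  move: dAB; rewrite inE => /andP[dB dA].
  by rewrite (bigD1 d) /= ?dA ?dB // leq_addr.
rewrite eA eB e1; by rewrite ltn_add2l (leq_trans h2 h3).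
Qed.

Lemma colex_tri A B : A != B ->
  (exists2 d, d \in A :\: B & forall y, y \in B :\: A -> y < d) \/
  (exists2 d, d \in B :\: A & forall y, y \in A :\: B -> y < d).
Proof.
move=> nAB.
have [x0 x0D] : exists x0, x0 \in (A :\: B) :|: (B :\: A).
  case: (pickP (mem ((A :\: B) :|: (B :\: A)))) => [x hx|h0]; first by exists x.
  case/negP: nAB; apply/eqP/setP => x; have := h0 x.
  by rewrite !inE; case: (x \in A); case: (x \in B).
case: (arg_maxnP (fun y : 'I_n => val y) x0D) => d dD dmax.
have dD2 : d \in (A :\: B) :|: (B :\: A) := dD.
move: dD2; rewrite inE => /orP[dAB|dBA].
  left; exists d => // y yBA.
  have hy : y \in (A :\: B) :|: (B :\: A) by rewrite inE yBA orbT.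
  move: (dmax y hy) => hle; case: (ltngtP y d) => // [hlt|e].
    have hle' : val y <= val d := hle.
    by rewrite ltnNge hle' in hlt.
  have ye : y = d by apply: val_inj.
  move: dAB yBA; rewrite ye !inE.
  by move=> /andP[_ hA] /andP[hA' _]; rewrite hA in hA'.
right; exists d => // y yAB.
have hy : y \in (A :\: B) :|: (B :\: A) by rewrite inE yAB.
move: (dmax y hy) => hle; case: (ltngtP y d) => // [hlt|e].
  have hle' : val y <= val d := hle.
    by rewrite ltnNge hle' in hlt.
have ye : y = d by apply: val_inj.
move: dBA yAB; rewrite ye !inE.
by move=> /andP[_ hA] /andP[hA' _]; rewrite hA in hA'.
Qed.

Definition sle A B := (minS A < minS B) || ((minS A == minS B) && (code B <= code A)).

Lemma sle_total : total sle.
Proof. move=> A B; rewrite /sle; case: ltngtP => //= _; exact: leq_total. Qed.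

Lemma sle_trans : transitive sle.
Proof.
move=> B A C; rewrite /sle => /orP[h1|/andP[/eqP e1 c1]] /orP[h2|/andP[/eqP e2 c2]].
- by rewrite (ltn_trans h1 h2).
- by rewrite -e2 h1.
- by rewrite e1 h2.
- by rewrite e1 e2 eqxx (leq_trans c2 c1) orbT.
Qed.

Lemma sle_strict A B : sle A B -> A != B ->
  minS A <= minS B /\
  (minS A = minS B -> exists2 d, d \in A :\: B & forall y, y \in B :\: A -> y < d).
Proof.
rewrite /sle => h nAB; split.
  by case/orP: h => [/ltnW //|/andP[/eqP -> _]].
move=> e; move: h; rewrite e ltnn eqxx /= => c.
case: (colex_tri nAB) => // -[d dBA hA].
by have := code_gt dBA hA; rewrite ltnNge c.
Qed.

Lemma dsj_neq (P Q : {set 'I_n}) x y : (forall z, z \in P -> z \in Q -> False) ->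
  x \in P -> y \in Q -> (x : nat) <> y.
Proof. by move=> h xP yQ e; have exy : x = y := val_inj e; apply: (h x) => //; rewrite exy. Qed.

Lemma tri (x y : 'I_n) : (x : nat) <> y -> x < y \/ y < x.
Proof. move=> h; lia. Qed.

Lemma notin_min (P : {set 'I_n}) x : val x < minS P -> x \notin P.
Proof. by move=> h; apply/negP => /minS_le; rewrite leqNgt h. Qed.

Lemma key_lemma (A I B F K K' : {set 'I_n}) (a i b f : 'I_n) :
  ~ axax_pair A I -> ~ axax_pair I B -> ~ axax_pair K' K ->
  (forall h1 k1 h2 k2, cyc_order4 h1 k1 h2 k2 -> h1 \in A -> h2 \in A -> k1 \in K -> k2 \in K -> False) ->
  (forall h1 k1 h2 k2, cyc_order4 h1 k1 h2 k2 -> h1 \in B -> h2 \in B -> k1 \in K -> k2 \in K -> False) ->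
  (forall h1 k1 h2 k2, cyc_order4 h1 k1 h2 k2 -> h1 \in I -> h2 \in I -> k1 \in K' -> k2 \in K' -> False) ->
  (forall x, x \in A -> x \in K -> False) ->
  (forall x, x \in B -> x \in K -> False) ->
  (forall x, x \in I -> x \in K' -> False) ->
  a \in A -> a \in K' -> b \in B -> b \in K' -> i \in I -> i \in K -> f \in F -> f \in K ->
  sle A I -> A != I -> sle I B -> I != B -> sle B F -> B != F -> False.
Proof.
move=> hAI hIB hKK ipA ipB ipI dA dB dI aA aK' bB bK' iI iK fF fK sAI nAI sIB nIB sBF nBF.
have [mAI tAI] := sle_strict sAI nAI.
have [mIB tIB] := sle_strict sIB nIB.
have [mBF _] := sle_strict sBF nBF.
have [al alA eal] := minS_mem aA.
have [io ioI eio] := minS_mem iI.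
have [be beB ebe] := minS_mem bB.
have fmin := minS_le fF.
have aminA := minS_le aA.
have iminI := minS_le iI.
have bminB := minS_le bB.
have n_al_i := dsj_neq dA alA iK.
have n_be_f := dsj_neq dB beB fK.
have n_b_f := dsj_neq dB bB fK.
have n_b_i := dsj_neq dB bB iK.
have n_be_i := dsj_neq dB beB iK.
have n_a_i := dsj_neq dA aA iK.
have n_a_f := dsj_neq dA aA fK.
have n_io_b := dsj_neq dI ioI bK'.
have n_io_a := dsj_neq dI ioI aK'.
have n_i_a := dsj_neq dI iI aK'.
have n_i_b := dsj_neq dI iI bK'.
have aKK : a \in K' :\: K by rewrite inE aK' andbT; apply/negP => /(dA a aA).
have bKK : b \in K' :\: K by rewrite inE bK' andbT; apply/negP => /(dB b bB).
case: (tri n_be_i) => [bei|ibe].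
-
  have iIB : i \in I :\: B by rewrite inE iI andbT; apply/negP => /(dB i)/(_ iK).
  have bBI : b \in B :\: I by rewrite inE bB andbT; apply/negP => /(dI b)/(_ bK').
  have bi : b < i.
    case: (tri n_b_i) => // ib.
    have [iobe|beio] := ltnP io be.
      have ioIB : io \in I :\: B by rewrite inE ioI andbT notin_min // -ebe.
      have [c _ _ _] := cyc_lin iobe bei ib.
      by case: hIB; exists io, be, i, b.
    have e2 : minS I = minS B by clear -beio mIB eio ebe; lia.
    have [d dIB hd] := tIB e2.
    have bd := hd b bBI.
    have [_ c _ _] := cyc_lin bei ib bd.
    by case: hIB; exists i, b, d, be.
  have iob : io < b.
    case: (tri n_io_b) => // bio.
    by clear -bio eio mIB ebe bminB; lia.
  have ioa : io < a.
    case: (tri n_io_a) => // aio.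
    have [_ c _ _] := cyc_lin aio iob bi.
    by case: (ipI _ _ _ _ c).
  have ai : a < i.
    case: (tri n_a_i) => // ia.
    have [c _ _ _] := cyc_lin iob bi ia.
    by case: (ipI _ _ _ _ c).
  have aAI : a \in A :\: I by rewrite inE aA andbT; apply/negP => /(dI a)/(_ aK').
  have iIA : i \in I :\: A by rewrite inE iI andbT; apply/negP => /(dA i)/(_ iK).
  have [alio|ioal] := ltnP al io.
    have alAI : al \in A :\: I by rewrite inE alA andbT notin_min // -eio.
    have [c _ _ _] := cyc_lin alio ioa ai.
    by case: hAI; exists al, io, a, i.
  have e2 : minS A = minS I by clear -ioal eal mAI eio; lia.
  have [d dAI hd] := tAI e2.
  have id := hd i iIA.
  have [_ c _ _] := cyc_lin ioa ai id.
  by case: hAI; exists a, i, d, io.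
-
  have bef : be < f by move: n_be_f; clear -ebe mBF fmin; lia.
  have bf : b < f.
    case: (tri n_b_f) => // fb.
    have [_ c _ _] := cyc_lin ibe bef fb.
    by case: (ipB _ _ _ _ c).
  have ib : i < b by clear -ibe bminB ebe; lia.
  case: (tri n_a_i) => [ai|ia].
    have [c _ _ _] := cyc_lin ai ib bf.
    by case: hKK; exists a, i, b, f.
  case: (tri n_a_f) => [af|fa].
    have ali : al < i by move: n_al_i; clear -eal mAI eio iminI; lia.
    have [c _ _ _] := cyc_lin ali ia af.
    by case: (ipA _ _ _ _ c).
  have [_ c _ _] := cyc_lin ib bf fa.
  by case: hKK; exists b, f, a, i.
Qed.

End Geo.

Section Greedy.
Variables (I : finType) (T : I -> nat -> bool).
Hypothesis LAF : forall k k' a i b f, a < i -> i < b -> b < f ->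
  T k' a -> ~~ T k a -> T k i -> ~~ T k' i -> T k' b -> ~~ T k b -> T k f -> False.

Definition vis (E : seq (nat * nat)) v := all (fun e => ~~ ((e.1 < v) && (v < e.2))) E.
Definition cand E j k := [seq v <- iota 0 j | T k v && vis E v].
Definition tgt E j k := \max_(v <- cand E j k) v.
Definition newE E j := [seq (tgt E j k, j) | k <- enum I & T k j && (cand E j k != [::])].
Definition step E j := E ++ newE E j.
Fixpoint build j := if j is j'.+1 then step (build j') j' else [::].

Definition adj (E : seq (nat * nat)) u v := ((u, v) \in E) || ((v, u) \in E).

Inductive rch (E : seq (nat * nat)) (P : nat -> bool) : nat -> nat -> Prop :=
 | rch0 x : rch E P x x
 | rchS x y z : adj E x y -> P x -> P y -> rch E P y z -> rch E P x z.

Lemma rch_trans E P x y z : rch E P x y -> rch E P y z -> rch E P x z.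
Proof. elim=> // x1 y1 z1 a px py _ IH /IH; exact: rchS. Qed.

Lemma rch_mono E E' P x y : {subset E <= E'} -> rch E P x y -> rch E' P x y.
Proof.
move=> sub; elim=> [x1|x1 y1 z1 a px py _ IH]; first exact: rch0.
apply: rchS IH => //; move: a; rewrite /adj => /orP[h|h]; by rewrite (sub _ h) ?orbT.
Qed.

Lemma rch_sym E P x y : rch E P x y -> rch E P y x.
Proof.
elim=> [x1|x1 y1 z1 a px py _ IH]; first exact: rch0.
apply: rch_trans IH _; apply: rchS (rch0 _ _ _) => //.
by move: a; rewrite /adj orbC.
Qed.

Lemma max_mem (s : seq nat) : s != [::] -> \max_(v <- s) v \in s.
Proof.
elim: s => // x s IH _; rewrite big_cons inE.
case: s IH => [|y s] IH; first by rewrite big_nil maxn0 eqxx.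
move: (IH isT); set M := \max_(v <- y :: s) v => hM.
by rewrite /maxn; case: ifP => _; [rewrite hM orbT | rewrite eqxx].
Qed.

Lemma tgt_spec E j k : cand E j k != [::] ->
  [/\ tgt E j k < j, T k (tgt E j k), vis E (tgt E j k) &
      forall v, v < j -> T k v -> vis E v -> v <= tgt E j k].
Proof.
move=> ne; have := max_mem ne; rewrite -/(tgt E j k) mem_filter mem_iota add0n.
case/andP=> /andP[h1 h2] /andP[_ h3]; split=> // v vj tv vv.
have := @leq_bigmax_seq _ (cand E j k) (fun _ => true) (fun v => v) v.
by rewrite mem_filter tv vv mem_iota vj => /(_ isT isT).
Qed.

Lemma newE_spec E j e : e \in newE E j ->
  exists k, [/\ T k j, cand E j k != [::] & e = (tgt E j k, j)].
Proof.
case/mapP=> k; rewrite mem_filter => /andP[/andP[h1 h2] _] ->.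
by exists k.
Qed.

Definition Inv j E :=
  [/\ forall e, e \in E -> e.1 < e.2 < j,
      forall e e', e \in E -> e' \in E -> ~~ [&& e.1 < e'.1, e'.1 < e.2 & e.2 < e'.2],
      forall k x y, x < j -> y < j -> T k x -> T k y -> rch E (T k) x y
    & forall k x f, x < j -> j <= f -> T k x -> T k f ->
        exists2 v, v < j & T k v && vis E v].

Lemma Inv0 : Inv 0 [::].
Proof. by split. Qed.

Lemma visP E v : reflect (forall e, e \in E -> ~~ ((e.1 < v) && (v < e.2))) (vis E v).
Proof. exact: allP. Qed.

Lemma Inv_step j E : Inv j E -> Inv j.+1 (step E j).
Proof.
case=> I1 I2 I3 I4.
have memS e : e \in step E j -> e \in E \/ e \in newE E j.
  by rewrite mem_cat => /orP.
have newP e : e \in newE E j -> [/\ e.1 < j, e.2 = j & vis E e.1].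
  by case/newE_spec=> k [_ ne ->]; have [h1 _ h3 _] := tgt_spec ne.
have oldP e : e \in E -> e.1 < e.2 < j := I1 e.
have inN k : T k j -> cand E j k != [::] -> (tgt E j k, j) \in newE E j.
  move=> tj ne; apply/mapP; exists k => //.
  by rewrite mem_filter tj ne mem_enum.
split.
- move=> e /memS [/oldP /andP[h1 h2]|/newP [h1 h2 _]].
    by rewrite h1 /= ltnW.
  by rewrite h2 ltnSn andbT.
- move=> e e' /memS [he|he] /memS [he'|he'].
  + exact: I2.
  + have [_ _ /visP v] := newP _ he'.
    by apply/negP => /and3P[h1 h2 h3]; move: (v e he); rewrite h1 h2.
  + have /andP[_ h] := oldP _ he'; have [_ h2 _] := newP _ he.
    by apply/negP => /and3P[_ _]; rewrite h2 ltnNge ltnW.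
  + have [_ h2 _] := newP _ he; have [_ h2' _] := newP _ he'.
    by apply/negP => /and3P[_ _]; rewrite h2 h2' ltnn.
- move=> k.
  have sub : {subset E <= step E j} by move=> e he; rewrite mem_cat he.
  have toj x : x < j -> T k x -> T k j -> rch (step E j) (T k) x j.
    move=> xj tx tj.
    have [v vj /andP[tv vv]] := I4 k x j xj (leqnn _) tx tj.
    have ne : cand E j k != [::].
      apply/eqP => e0; have : v \in cand E j k by rewrite mem_filter tv vv mem_iota.
      by rewrite e0.
    have [h1 h2 h3 _] := tgt_spec ne.
    apply: rch_trans (rch_mono sub (I3 _ _ _ xj h1 tx h2)) _.
    apply: rchS (rch0 _ _ _) => //.
    by rewrite /adj mem_cat (inN k tj ne) orbT.
  move=> x y xj1 yj1 tx ty.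
  have [xj|xj] := ltnP x j; have [yj|yj] := ltnP y j.
  + exact: rch_mono sub (I3 _ _ _ xj yj tx ty).
  + have ey : y = j by apply/eqP; rewrite eqn_leq yj -ltnS yj1.
    by rewrite ey in ty *; apply: toj.
  + have ex : x = j by apply/eqP; rewrite eqn_leq xj -ltnS xj1.
    by rewrite ex in tx *; apply/rch_sym/toj.
  + have ey : y = j by apply/eqP; rewrite eqn_leq yj -ltnS yj1.
    have ex : x = j by apply/eqP; rewrite eqn_leq xj -ltnS xj1.
    by rewrite ex ey; apply: rch0.
- move=> k x f xj jf tx tf.
  case tj: (T k j).
    exists j => //; rewrite tj /=; apply/visP => e /memS [/oldP /andP[_ h]|/newP [_ h _]].
      have -> : (j < e.2) = false by apply/negbTE; rewrite -leqNgt ltnW.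
      by rewrite andbF.
    by rewrite h ltnn andbF.
  have xj' : x < j.
    rewrite ltn_neqAle -ltnS xj andbT; apply/negP => /eqP e; by rewrite e tj in tx.
  have [v0 v0j /andP[tv0 vv0]] := I4 k x f xj' (ltnW jf) tx tf.
  case: (boolP (newE E j == [::])) => [/eqP e0|ne0].
    exists v0; [exact: ltnW | by rewrite tv0 /vis all_cat -/(vis E v0) vv0 e0].
  have exP : exists u, has (fun e : nat * nat => e.1 == u) (newE E j).
    case: (newE E j) ne0 => // e0 s0 _; exists e0.1; by rewrite /= eqxx.
  case: (ex_minnP exP) => t0 /hasP [e0 e0N /eqP e0t] t0min.
  have [k' [tk'j nek' e0e]] := newE_spec e0N.
  have [tgj tgT tgV tgM] := tgt_spec nek'.
  rewrite e0e /= in e0t; rewrite e0t in tgj tgT tgV tgM.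
  have visS u : u <= t0 -> vis E u -> vis (step E j) u.
    move=> ut vu; rewrite /vis all_cat -/(vis E u) vu /=.
    apply/allP => e eN.
    have te : t0 <= e.1 by apply: t0min; apply/hasP; exists e.
    by rewrite negb_and -leqNgt (leq_trans ut te).
  case tkt: (T k t0).
    by exists t0; [exact: ltnW | rewrite tkt visS].
  case: (leqP v0 t0) => [vt|tv].
    by exists v0; [exact: ltnW | rewrite tv0 visS].
  exfalso; apply: (LAF (k := k) (k' := k') tv v0j jf) => //; rewrite ?tkt ?tj //.
  apply/negP => tk'v; have := tgM v0 v0j tk'v vv0; by rewrite leqNgt tv.
Qed.

Lemma Inv_build j : Inv j (build j).
Proof. elim: j => [|j IH] /=; [exact: Inv0 | exact: Inv_step]. Qed.

End Greedy.


Theorem mainTheorem14 (n : nat) (HH KK : {set {set 'I_n}}) :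
  3 <= n ->
  strong_axax_free HH KK ->
  exists Q : rel {set 'I_n},
    [/\ simple_graph_on HH Q,
        outerplanar HH Q
      & forall K, K \in KK ->
          induces_connected Q [set H in HH | H :&: K != set0]].
Proof.
move=> _ [axH axK ipHK].
pose s := sort (@sle n) (enum HH).
have s_uniq : uniq s by rewrite sort_uniq enum_uniq.
have s_mem H : (H \in s) = (H \in HH) by rewrite mem_sort mem_enum.
have s_sorted : sorted (@sle n) s := sort_sorted (@sle_total n) _.
pose m := size s.
have nthHH p : p < m -> nth set0 s p \in HH by move=> pm; rewrite -s_mem mem_nth.
pose T (k : {set 'I_n}) (p : nat) := [&& k \in KK, p < m & nth set0 s p :&: k != set0].
have disj (X Y : {set 'I_n}) : X :&: Y == set0 -> forall x, x \in X -> x \in Y -> False.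
  by move=> /eqP/setP h x xX xY; move: (h x); rewrite !inE xX xY.
have pt (X Y : {set 'I_n}) : X :&: Y != set0 -> exists2 x, x \in X & x \in Y.
  by case/set0Pn => x; rewrite inE => /andP[]; exists x.
have ltS p q : p < m -> q < m -> p < q -> sle (nth set0 s p) (nth set0 s q).
  move=> pm qm pq; exact: (sorted_ltn_nth (@sle_trans n) set0 s_sorted).
have neS p q : p < m -> q < m -> p < q -> nth set0 s p != nth set0 s q.
  by move=> pm qm pq; rewrite nth_uniq // neq_ltn pq.
have LAF : forall k k' a i b f, a < i -> i < b -> b < f ->
    T k' a -> ~~ T k a -> T k i -> ~~ T k' i -> T k' b -> ~~ T k b -> T k f -> False.
  move=> k k' a i b f ai ib bf.
  rewrite /T => /and3P[k'K am ak'] + /and3P[kK im ik] + /and3P[_ bm bk'] + /and3P[_ fm fk].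
  rewrite kK k'K am im bm /= !negbK => ak ik' bk.
  have [x xA xk'] := pt _ _ ak'.
  have [y yI yk] := pt _ _ ik.
  have [z zB zk'] := pt _ _ bk'.
  have [w wF wk] := pt _ _ fk.
  have ipX (X Y : {set 'I_n}) : X \in HH -> Y \in KK -> X :&: Y == set0 ->
      forall h1 k1 h2 k2, cyc_order4 h1 k1 h2 k2 -> h1 \in X -> h2 \in X ->
      k1 \in Y -> k2 \in Y -> False.
    move=> XH YK e h1 k1 h2 k2 c h1X h2X k1Y k2Y.
    by move: (ipHK X Y XH YK h1 k1 h2 k2 c h1X h2X k1Y k2Y); rewrite e.
  apply: (key_lemma (axH _ _ (nthHH _ am) (nthHH _ im)) (axH _ _ (nthHH _ im) (nthHH _ bm))
            (axK _ _ k'K kK) (ipX _ _ (nthHH _ am) kK ak) (ipX _ _ (nthHH _ bm) kK bk)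
            (ipX _ _ (nthHH _ im) k'K ik') (disj _ _ ak) (disj _ _ bk) (disj _ _ ik')
            xA xk' zB zk' yI yk wF wk).
  - exact: ltS.
  - exact: neS.
  - exact: ltS.
  - exact: neS.
  - exact: ltS.
  - exact: neS.
pose E := build T m.
have [I1 I2 I3 _] : Inv T m E := Inv_build LAF m.
pose Q := fun u v : {set 'I_n} => [&& u \in HH, v \in HH & adj E (index u s) (index v s)].
have edge_lt e : e \in E -> e.1 < e.2 by move/I1 => /andP[].
have adj_lt p q : p < q -> adj E p q -> (p, q) \in E.
  move=> pq /orP[//|/edge_lt /= qp]; by move: (ltn_trans pq qp); rewrite ltnn.
exists Q; split.
- split.
  + by move=> x y; rewrite /Q /adj => /and3P[-> -> h]; rewrite orbC.
  + move=> x; apply/negP; rewrite /Q /adj orbb => /and3P[_ _ /edge_lt /=].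
    by rewrite ltnn.
  + by move=> x y /and3P[-> -> _].
- exists (fun H => index H s); split.
    move=> x y xH yH e.
    by rewrite -(nth_index set0 (_ : x \in s)) ?s_mem // e nth_index ?s_mem.
  move=> a b c d /and3P[_ _ ab] /and3P[_ _ cd] [h1 h2 h3].
  have eab := adj_lt _ _ (ltn_trans h1 h2) ab.
  have ecd := adj_lt _ _ (ltn_trans h2 h3) cd.
  by move: (I2 _ _ eab ecd); rewrite /= h1 h2 h3.
- move=> K KK_K x y.
  have conv : forall p q, rch E (T K) p q ->
      connect [rel u v | [&& Q u v, u \in [set H in HH | H :&: K != set0]
                               & v \in [set H in HH | H :&: K != set0]]]
              (nth set0 s p) (nth set0 s q).
    move=> p q; elim=> [p0|p0 q0 r0 a tp tq _ IH]; first exact: connect0.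
    apply: connect_trans IH; apply: connect1.
    move: tp tq; rewrite /T => /and3P[_ pm pK] /and3P[_ qm qK].
    by rewrite /= /Q !inE !nthHH // pK qK !index_uniq // a.
  rewrite !inE => /andP[xH xK] /andP[yH yK].
  have xs : x \in s by rewrite s_mem.
  have ys : y \in s by rewrite s_mem.
  rewrite -(nth_index set0 xs) -(nth_index set0 ys); apply: conv.
  apply: I3; rewrite ?index_mem //.
  + by rewrite /T KK_K index_mem xs nth_index.
  + by rewrite /T KK_K index_mem ys nth_index.
Qed.
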